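(* In the algorithm described in the context, for each agent $i$ and each round $r$, when $N$ is sufficiently large such that $N\ge4\ln N$, the number $V_i^r$ of perturbed adoption vectors sampled by agent $i$ in round $r$ satisfies $$\frac{3(1-\beta)}{32}hg(N)\le V_i^r\le\frac{15}{8}hg(N)$$ with probability at least $1-\frac{6M+3}{N^{10}}$.
   Context: Setting. $\mathcal G=(\mathcal N,\mathcal E)$ is a connected, non-bipartite undirected graph on agents $\mathcal N=\{1,\dots,N\}$; $\mathcal N_i$ is the neighbor set of $i$, $N_i=|\mathcal N_i|$. There are $M$ options; quality signals $\Phi_j^r\in\{0,1\}$ are i.i.d. Bernoulli$(\eta_j)$ over rounds $r$. $X^r_{i,j}\in\{0,1\}$ indicates agent $i$ adopts option $j$ in round $r$ ($\sum_jX^r_{i,j}\le1$); $D^r_j=\sum_iX^r_{i,j}$, $D^r=\sum_jD^r_j$, $Q^r_j=D^r_j/D^r$, $Q^0_j=1/M$. The function $g:\mathbb N^+\to\mathbb R$ satisfies: for every $\ell>0$, $g(N)>\ell\ln N$ and $g(N)<\ell N$ for all sufficiently large $N$. Parameters: $\varepsilon>0$, $\mu\in(0,1)$, $\beta\in(1/2,1)$, $\sigma\ge11$, $h=16\sigma/(1-\beta)$. Metropolis–Hastings random walk: from $i$ move to $i'\in\mathcal N_i$ with probability $\min\{1/N_i,1/N_{i'}\}$, else stay; walk length $L=O(\log N)$ chosen so that the endpoint is at each agent with probability in $[\frac1N-\frac1{N^3},\frac1N+\frac1{N^3}]$. Round $r$: (1) an agent that adopted an option in round $r-1$ perturbs each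 coordinate of its adoption vector independently (keep with probability $\frac{e^{\varepsilon/2}}{e^{\varepsilon/2}+1}$, flip otherwise); (2) each such agent launches $hg(N)$ independent random-walk tokens of length $L$ carrying its perturbed vector (forwarded via per-agent FIFO queues, up to $hg(N)$ tokens per agent per slot); a token is sampled by the agent where it ends; $V^r_i$ is the number of tokens sampled by $i$; (3) with $\Lambda^r_{i,j}$ the fraction of sampled vectors with $j$-th coordinate $1$, $\widetilde Q^r_{i,j}=\max\{\frac{e^{\varepsilon/2}+1}{e^{\varepsilon/2}-1}\Lambda^r_{i,j}-\frac1{e^{\varepsilon/2}-1},0\}$, $\widehat Q^r_{i,j}=\widetilde Q^r_{i,j}/\sum_{j'}\widetilde Q^r_{i,j'}$, and $i$ selects option $j$ with probability $(1-\mu)\widehat Q^r_{i,j}+\mu/M$; (4) having selected $j^*$, $i$ adopts it with probability $\beta$ if $\Phi^r_{j^*}=1$, $1-\beta$ if $\Phi^r_{j^*}=0$, else adopts nothing. *)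

(* Defs.v *)
From HB Require Import structures.
From mathcomp Require Import all_boot all_order all_algebra.
From mathcomp Require Import reals sequences exp.
Set Implicit Arguments.
Unset Strict Implicit.
Unset Printing Implicit Defensive.
Import Order.TTheory GRing.Theory Num.Theory.
Local Open Scope ring_scope.

(* Graph: agents are 'I_N, the undirected graph is a symmetric,        *)
(* irreflexive relation adj.                                           *)

Definition graph_connected (N : nat) (adj : rel 'I_N) : Prop :=
  forall u v : 'I_N, connect adj u v.

Definition bipartite (N : nat) (adj : rel 'I_N) : Prop :=
  exists f : 'I_N -> bool, forall u v, adj u v -> f u != f v.

Definition deg (N : nat) (adj : rel 'I_N) (u : 'I_N) : nat := #|[set v | adj u v]|.

Definition mh_step (R : realType) (N : nat) (adj : rel 'I_N) (u v : 'I_N) : R :=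
  if u == v then
    1 - \sum_(w | adj u w) Num.min ((deg adj u)%:R^-1) ((deg adj w)%:R^-1)
  else if adj u v then Num.min ((deg adj u)%:R^-1) ((deg adj v)%:R^-1)
  else 0.

Fixpoint mh_walk (R : realType) (N : nat) (adj : rel 'I_N) (L : nat) (u v : 'I_N) : R :=
  match L with
  | 0 => (u == v)%:R
  | L'.+1 => \sum_w mh_step R adj u w * mh_walk R adj L' w v
  end.

Definition mixing (R : realType) (N : nat) (adj : rel 'I_N) (L : nat) : Prop :=
  forall u v : 'I_N,
    (N%:R)^-1 - (N%:R ^+ 3)^-1 <= mh_walk R adj L u v <= (N%:R)^-1 + (N%:R ^+ 3)^-1.

(* State of a round: x a = Some j iff agent a adopted option j,       *)
(* None iff it adopted nothing.                                        *)

Definition state (N M : nat) := {ffun 'I_N -> option 'I_M}.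
Definition pvecs (N M : nat) := {ffun 'I_N -> {ffun 'I_M -> bool}}.
Definition endpoints (N T : nat) := {ffun 'I_N -> {ffun 'I_T -> 'I_N}}.

Definition keep_prob (R : realType) (eps : R) : R :=
  expR (eps / 2) / (expR (eps / 2) + 1).

(* step (1): randomized response; non-adopters carry a dummy vector *)
Definition pert_w (R : realType) (N M : nat) (eps : R) (x : state N M) (y : pvecs N M) : R :=
  \prod_(a : 'I_N)
    match x a with
    | Some j0 => \prod_(j : 'I_M)
                   (if y a j == (j == j0) then keep_prob eps else 1 - keep_prob eps)
    | None => (y a == [ffun => false])%:R
    end.

(* step (2): each adopter launches T independent tokens, each ending
   according to the L-step MH walk from its launcher; non-adopters have dummy
   endpoints (and their tokens are not counted). *)
Definition tok_w (R : realType) (N M T : nat) (adj : rel 'I_N) (L : nat)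
    (x : state N M) (e : endpoints N T) : R :=
  \prod_(a : 'I_N)
    match x a with
    | Some _ => \prod_(k : 'I_T) mh_walk R adj L a (e a k)
    | None => (e a == [ffun => a])%:R
    end.

(* V_i : number of tokens (hence perturbed vectors) sampled by agent i *)
Definition sampled (N M T : nat) (x : state N M) (e : endpoints N T) (i : 'I_N) : nat :=
  (\sum_(a : 'I_N) \sum_(k : 'I_T) ((x a != None) && (e a k == i) : nat))%N.

Definition Lambda (R : realType) (N M T : nat) (x : state N M) (y : pvecs N M)
    (e : endpoints N T) (i : 'I_N) (j : 'I_M) : R :=
  (\sum_(a : 'I_N) \sum_(k : 'I_T) ((x a != None) && (e a k == i) && y a j : nat))%N%:R
    / (sampled x e i)%:R.

Definition Qtil (R : realType) (N M T : nat) (eps : R) (x : state N M) (y : pvecs N M)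
    (e : endpoints N T) (i : 'I_N) (j : 'I_M) : R :=
  let c := expR (eps / 2) in
  Num.max ((c + 1) / (c - 1) * Lambda R x y e i j - (c - 1)^-1) 0.

(* normalisation; convention: if all Qtil vanish, fall back to Q^0_j = 1/M *)
Definition Qhat (R : realType) (N M T : nat) (eps : R) (x : state N M) (y : pvecs N M)
    (e : endpoints N T) (i : 'I_N) (j : 'I_M) : R :=
  let s := \sum_(j' : 'I_M) Qtil eps x y e i j' in
  if s == 0 then (M%:R)^-1 else Qtil eps x y e i j / s.

Definition sel_p (R : realType) (N M T : nat) (eps mu : R) (x : state N M) (y : pvecs N M)
    (e : endpoints N T) (i : 'I_N) (j : 'I_M) : R :=
  (1 - mu) * Qhat eps x y e i j + mu / M%:R.

Definition phi_w (R : realType) (M : nat) (eta : 'I_M -> R) (phi : {ffun 'I_M -> bool}) : R :=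
  \prod_(j : 'I_M) (if phi j then eta j else 1 - eta j).

Definition adopt_w (R : realType) (N M : nat) (beta : R) (phi : {ffun 'I_M -> bool})
    (s : {ffun 'I_N -> 'I_M}) (x' : state N M) : R :=
  \prod_(i : 'I_N)
    match x' i with
    | Some j => (j == s i)%:R * (if phi j then beta else 1 - beta)
    | None => if phi (s i) then 1 - beta else beta
    end.

Definition kernel (R : realType) (N M T : nat) (adj : rel 'I_N) (L : nat)
    (eps mu beta : R) (eta : 'I_M -> R) (x x' : state N M) : R :=
  \sum_(y : pvecs N M) \sum_(e : endpoints N T) \sum_(phi : {ffun 'I_M -> bool})
    \sum_(s : {ffun 'I_N -> 'I_M})
      pert_w eps x y * tok_w R adj L x e * phi_w eta phi
      * (\prod_(i : 'I_N) sel_p eps mu x y e i (s i)) * adopt_w beta phi s x'.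

Fixpoint Xlaw (R : realType) (N M T : nat) (adj : rel 'I_N) (L : nat)
    (eps mu beta : R) (eta : 'I_M -> R) (r : nat) (x : state N M) : R :=
  match r with
  | 0 => (x == [ffun => None])%:R
  | r'.+1 => \sum_(x0 : state N M)
               Xlaw T adj L eps mu beta eta r' x0 * kernel T adj L eps mu beta eta x0 x
  end.

(* Pr[ lo <= V_i^r <= hi ], r >= 1: tokens of round r are launched by the
   adopters of round r-1 *)
Definition prob_V (R : realType) (N M T : nat) (adj : rel 'I_N) (L : nat)
    (eps mu beta : R) (eta : 'I_M -> R) (r : nat) (i : 'I_N) (lo hi : R) : R :=
  \sum_(x : state N M) Xlaw T adj L eps mu beta eta r.-1 x *
    \sum_(e : endpoints N T) tok_w R adj L x e * (nat_of_bool ((lo <= (sampled x e i)%:R :> R) && ((sampled x e i)%:R <= hi))%R)%:R.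

(* Main.v *)
Require Import Defs.
From HB Require Import structures.
From mathcomp Require Import all_boot all_order all_algebra.
From mathcomp Require Import reals sequences exp.
From mathcomp Require Import ring lra.
Import Order.TTheory GRing.Theory Num.Theory.
Local Open Scope ring_scope.

Section Gen.
Variable R : realType.

Lemma sum_ffun_prod (I J : finType) (F : I -> J -> R) :
  \sum_(f : {ffun I -> J}) \prod_i F i (f i) = \prod_i \sum_j F i j.
Proof. by rewrite bigA_distr_bigA. Qed.

Lemma mgf_prod (I J : finType) (w : I -> J -> R) (c : I -> J -> nat) (t : R) :
  \sum_(f : {ffun I -> J}) (\prod_i w i (f i)) * expR (t * (\sum_i c i (f i))%N%:R)
  = \prod_i \sum_j w i j * expR (t * (c i j)%:R).
Proof.
rewrite -sum_ffun_prod; apply: eq_bigr => f _.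
rewrite natr_sum mulr_sumr expR_sum -big_split //.
Qed.

Lemma ind_lt_exp (a b t : R) : 0 <= t -> (nat_of_bool (a < b)%R)%:R <= expR (t * (b - a)).
Proof.
move=> t0; case: ltP => ab /=; last exact: expR_ge0.
rewrite -expR0 ler_expR; apply: mulr_ge0 => //; lra.
Qed.

Lemma expR_le_inv (x : R) : x < 1 -> expR x <= (1 - x)^-1.
Proof.
move=> x1; have h := expR_ge1Dx (- x).
have ex := expR_gt0 x.
have e1 := expRxMexpNx_1 x.
have y1 : (1 - x)^-1 * (1 - x) = 1 by rewrite mulVf //; lra.
have y0 : 0 < (1 - x)^-1 by rewrite invr_gt0; lra.
nra.
Qed.

Lemma expR1_le4 : expR 1 <= 4 :> R.
Proof.
have h := @expR_le_inv (1/2) ltac:(lra).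
have -> : (1 : R) = 1/2 + 1/2 by field.
rewrite expRD.
have e0 := expR_gt0 (1/2 : R).
have e2 : (1 - 1/2 : R)^-1 = 2 by field.
rewrite e2 in h.
nra.
Qed.

Lemma expRN1_le_half : expR (-1) <= 1/2 :> R.
Proof.
have h := expR_ge1Dx (1 : R).
have e0 := expR_gt0 (1 : R).
have e1 := expRxMexpNx_1 (1:R).
have e2 := expR_gt0 (-1 : R).
nra.
Qed.

End Gen.
Section Walk.
Variables (R : realType) (N : nat) (adj : rel 'I_N).
Hypothesis irr : irreflexive adj.

Lemma mh_step_sum u : \sum_v mh_step R adj u v = 1.
Proof.
rewrite (bigD1 u) //= /mh_step eqxx.
suff -> : \sum_(v | v != u) (if u == v then 1 - \sum_(w | adj u w) Num.min ((deg adj u)%:R^-1 : R) ((deg adj w)%:R^-1)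
     else if adj u v then Num.min ((deg adj u)%:R^-1 : R) ((deg adj v)%:R^-1) else 0) = \sum_(w | adj u w) Num.min ((deg adj u)%:R^-1 : R) ((deg adj w)%:R^-1).
  by rewrite subrK.
rewrite big_mkcond [RHS]big_mkcond /=; apply: eq_bigr => v _.
case: (eqVneq v u) => [->|nvu]; first by rewrite irr.
by [].
Qed.

Lemma mh_walk_sum L u : \sum_v mh_walk R adj L u v = 1.
Proof.
elim: L u => [|L IH] u /=.
  by rewrite (bigD1 u) //= eqxx big1 ?addr0 // => v /negbTE; rewrite eq_sym => ->.
rewrite exchange_big /=.
under eq_bigr do rewrite -mulr_sumr IH mulr1.
exact: mh_step_sum.
Qed.

End Walk.

Lemma sum_option (R : nmodType) (J : finType) (F : option J -> R) :
  \sum_u F u = F None + \sum_j F (Some j).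
Proof.
rewrite /index_enum !unlock /=; congr (_ + _).
rewrite !unlock /=.
by elim: (isFinite.enum_subdef _) => //= a l ->.
Qed.

Lemma sum_eq1 (R : realType) (J : finType) (c : J) : \sum_j ((j == c)%:R : R) = 1.
Proof.
by rewrite (bigD1 c) //= eqxx big1 ?addr0 // => j /negbTE ->.
Qed.

Section Kern.
Variables (R : realType) (N M T : nat) (adj : rel 'I_N) (L : nat) (eps mu beta : R)
  (eta : 'I_M -> R).
Hypotheses (M0 : (0 < M)%N) (mu01 : 0 < mu < 1) (beta01 : 0 < beta < 1)
  (eta01 : forall j, 0 <= eta j <= 1) (irr : irreflexive adj)
  (walk0 : forall u v, 0 <= mh_walk R adj L u v).

Lemma keep01 : 0 <= keep_prob eps <= 1.
Proof.
rewrite /keep_prob; have e0 := expR_gt0 (eps / 2).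
apply/andP; split; first by apply: divr_ge0; lra.
by rewrite ler_pdivrMr; lra.
Qed.

Lemma pert_sum (x : state N M) : \sum_y pert_w eps x y = 1.
Proof.
rewrite /pert_w (@sum_ffun_prod R _ _ (fun a (ya : {ffun 'I_M -> bool}) => match x a with
    | Some j0 => \prod_(j : 'I_M)
                   (if ya j == (j == j0) then keep_prob eps else 1 - keep_prob eps)
    | None => (ya == [ffun => false])%:R
    end)).
apply: big1 => a _; case: (x a) => [j0|]; last exact: sum_eq1.
rewrite (@sum_ffun_prod R _ _ (fun j (b : bool) => if b == (j == j0) then keep_prob eps else 1 - keep_prob eps)).
by apply: big1 => j _; rewrite big_bool /=; case: (j == j0) => /=; ring.
Qed.

Lemma pert_ge0 (x : state N M) y : 0 <= pert_w eps x y.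
Proof.
have /andP[k0 k1] := keep01.
rewrite /pert_w; apply: prodr_ge0 => a _; case: (x a) => [j0|]; last exact: ler0n.
by apply: prodr_ge0 => j _; case: ifP => _; lra.
Qed.

Lemma tok_sum (x : state N M) : \sum_e tok_w R adj L x (e : endpoints N T) = 1.
Proof.
rewrite /tok_w (@sum_ffun_prod R _ _ (fun a (ea : {ffun 'I_T -> 'I_N}) => match x a with
    | Some _ => \prod_(k : 'I_T) mh_walk R adj L a (ea k)
    | None => (ea == [ffun => a])%:R
    end)).
apply: big1 => a _; case: (x a) => [j0|]; last exact: sum_eq1.
rewrite (@sum_ffun_prod R _ _ (fun k v => mh_walk R adj L a v)).
by apply: big1 => k _; rewrite mh_walk_sum.
Qed.

Lemma tok_ge0 (x : state N M) (e : endpoints N T) : 0 <= tok_w R adj L x e.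
Proof.
rewrite /tok_w; apply: prodr_ge0 => a _; case: (x a) => [j0|]; last exact: ler0n.
by apply: prodr_ge0 => k _.
Qed.

Lemma Qhat_sum (x : state N M) y (e : endpoints N T) i :
  \sum_j Qhat eps x y e i j = 1.
Proof.
rewrite /Qhat; case: eqP => [_|s0].
  rewrite sumr_const card_ord -[_ *+ M]mulr_natr mulVf //.
  by rewrite pnatr_eq0 -lt0n.
by rewrite -mulr_suml mulfV //; apply/eqP.
Qed.

Lemma Qtil_ge0 (x : state N M) y (e : endpoints N T) i j : 0 <= Qtil eps x y e i j.
Proof. by rewrite /Qtil le_max lexx orbT. Qed.

Lemma Qhat_ge0 (x : state N M) y (e : endpoints N T) i j : 0 <= Qhat eps x y e i j.
Proof.
rewrite /Qhat; case: eqP => _; first by rewrite invr_ge0 ler0n.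
apply: divr_ge0; first exact: Qtil_ge0.
by apply: sumr_ge0 => k _; apply: Qtil_ge0.
Qed.

Lemma sel_sum (x : state N M) y (e : endpoints N T) i :
  \sum_j sel_p eps mu x y e i j = 1.
Proof.
rewrite /sel_p big_split /= -mulr_sumr Qhat_sum sumr_const card_ord.
have M0' : (M%:R : R) != 0 by rewrite pnatr_eq0 -lt0n.
rewrite -[_ *+ M]mulr_natr -mulrA mulVf // mulr1; ring.
Qed.

Lemma sel_ge0 (x : state N M) y (e : endpoints N T) i j :
  0 <= sel_p eps mu x y e i j.
Proof.
have /andP[m0 m1] := mu01.
rewrite /sel_p; apply: addr_ge0; last by apply: divr_ge0; [lra| exact: ler0n].
apply: mulr_ge0; [lra | exact: Qhat_ge0].
Qed.

Lemma phi_sum : \sum_phi phi_w eta phi = 1.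
Proof.
rewrite /phi_w (@sum_ffun_prod R _ _ (fun j (b : bool) => if b then eta j else 1 - eta j)).
by apply: big1 => j _; rewrite big_bool /=; ring.
Qed.

Lemma phi_ge0 phi : 0 <= phi_w eta phi.
Proof.
rewrite /phi_w; apply: prodr_ge0 => j _; have /andP[e0 e1] := eta01 j; case: (phi j); lra.
Qed.

Lemma adopt_sum phi (s : {ffun 'I_N -> 'I_M}) : \sum_x' adopt_w beta phi s (x' : state N M) = 1.
Proof.
rewrite /adopt_w (@sum_ffun_prod R _ _ (fun i (u : option 'I_M) => match u with
    | Some j => (j == s i)%:R * (if phi j then beta else 1 - beta)
    | None => if phi (s i) then 1 - beta else beta
    end)).
apply: big1 => i _; rewrite sum_option /=.
rewrite (bigD1 (s i)) //= eqxx mul1r big1 ?addr0; last first.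
  by move=> j /negbTE ->; rewrite mul0r.
by case: (phi (s i)); ring.
Qed.

Lemma adopt_ge0 phi (s : {ffun 'I_N -> 'I_M}) (x' : state N M) : 0 <= adopt_w beta phi s x'.
Proof.
have /andP[b0 b1] := beta01.
rewrite /adopt_w; apply: prodr_ge0 => i _; case: (x' i) => [j|].
  by apply: mulr_ge0; [exact: ler0n | case: (phi j); lra].
by case: (phi (s i)); lra.
Qed.

Definition Wt (x0 : state N M) y (e : endpoints N T) phi (s : {ffun 'I_N -> 'I_M}) : R :=
  pert_w eps x0 y * tok_w R adj L x0 e * phi_w eta phi
      * (\prod_(i : 'I_N) sel_p eps mu x0 y e i (s i)).

Lemma Wt_ge0 x0 y e phi s : 0 <= Wt x0 y e phi s.
Proof.
rewrite /Wt; apply: mulr_ge0; last by apply: prodr_ge0 => i _; apply: sel_ge0.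
apply: mulr_ge0; last exact: phi_ge0.
apply: mulr_ge0; [exact: pert_ge0 | exact: tok_ge0].
Qed.

Lemma sel_prod_sum x0 y (e : endpoints N T) :
  \sum_(s : {ffun 'I_N -> 'I_M}) \prod_i sel_p eps mu x0 y e i (s i) = 1.
Proof.
rewrite (@sum_ffun_prod R _ _ (fun i j => sel_p eps mu x0 y e i j)).
by apply: big1 => i _; apply: sel_sum.
Qed.

Lemma Wt_sum x0 : \sum_y \sum_e \sum_phi \sum_s Wt x0 y e phi s = 1.
Proof.
rewrite /Wt.
transitivity (\sum_y \sum_(e : endpoints N T) \sum_phi pert_w eps x0 y * tok_w R adj L x0 e * phi_w eta phi).
  apply: eq_bigr => y _; apply: eq_bigr => e _; apply: eq_bigr => phi _.
  by rewrite -mulr_sumr sel_prod_sum mulr1.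
transitivity (\sum_y \sum_(e : endpoints N T) pert_w eps x0 y * tok_w R adj L x0 e).
  apply: eq_bigr => y _; apply: eq_bigr => e _.
  by rewrite -mulr_sumr phi_sum mulr1.
transitivity (\sum_y pert_w eps x0 y).
  by apply: eq_bigr => y _; rewrite -mulr_sumr tok_sum mulr1.
exact: pert_sum.
Qed.

Lemma kernel_expand (x0 : state N M) (F : state N M -> R) :
  \sum_x' kernel T adj L eps mu beta eta x0 x' * F x' =
  \sum_y \sum_e \sum_phi \sum_s Wt x0 y e phi s * (\sum_x' adopt_w beta phi s x' * F x').
Proof.
rewrite /kernel.
under eq_bigr do rewrite mulr_suml.
rewrite exchange_big; apply: eq_bigr => y _.
under eq_bigr do rewrite mulr_suml.
rewrite exchange_big; apply: eq_bigr => e _.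
under eq_bigr do rewrite mulr_suml.
rewrite exchange_big; apply: eq_bigr => phi _.
under eq_bigr do rewrite mulr_suml.
rewrite exchange_big; apply: eq_bigr => s _.
by rewrite mulr_sumr; apply: eq_bigr => x' _; rewrite /Wt !mulrA.
Qed.

Lemma kernel_ge0 x0 x' : 0 <= kernel T adj L eps mu beta eta x0 x'.
Proof.
rewrite /kernel; do 4! (apply: sumr_ge0 => ? _).
apply: mulr_ge0; last exact: adopt_ge0.
exact: Wt_ge0.
Qed.

Lemma kernel_sum x0 : \sum_x' kernel T adj L eps mu beta eta x0 x' = 1.
Proof.
transitivity (\sum_x' kernel T adj L eps mu beta eta x0 x' * (fun _ => 1) x').
  by apply: eq_bigr => x' _; rewrite mulr1.
rewrite kernel_expand.
transitivity (\sum_y \sum_(e : endpoints N T) \sum_phi \sum_s Wt x0 y e phi s); last exact: Wt_sum.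
apply: eq_bigr => y _; apply: eq_bigr => e _; apply: eq_bigr => phi _.
apply: eq_bigr => s _.
by under eq_bigr do rewrite mulr1; rewrite adopt_sum mulr1.
Qed.

Lemma Xlaw_ge0 r x : 0 <= Xlaw T adj L eps mu beta eta r x.
Proof.
elim: r x => [|r IH] x /=; first exact: ler0n.
by apply: sumr_ge0 => x0 _; apply: mulr_ge0 => //; apply: kernel_ge0.
Qed.

Lemma Xlaw_sum r : \sum_x Xlaw T adj L eps mu beta eta r x = 1.
Proof.
elim: r => [|r IH] /=; first exact: sum_eq1.
rewrite exchange_big /=.
under eq_bigr do rewrite -mulr_sumr kernel_sum mulr1.
exact: IH.
Qed.

End Kern.

Definition Dn (N M : nat) (x : state N M) : nat := (\sum_i ((x i != None) : nat))%N.
Arguments Dn {N M}.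

Section Chern.
Variables (R : realType) (N M T : nat) (adj : rel 'I_N) (L : nat) (beta : R).
Hypotheses (beta01 : 1/2 < beta < 1) (irr : irreflexive adj).

Lemma adopt_tail phi (s : {ffun 'I_N -> 'I_M}) (d : R) :
  \sum_(x' : state N M) adopt_w beta phi s x' * (nat_of_bool ((Dn x')%:R < d))%:R
  <= expR (d - (1 - beta) / 2 * N%:R).
Proof.
have /andP[b0 b1] := beta01.
have b01' : 0 < beta < 1 by apply/andP; split; lra.
apply: (@le_trans _ _ (\sum_(x' : state N M) adopt_w beta phi s x' *
    (expR d * expR ((-1) * (Dn x')%:R)))).
  apply: ler_sum => x' _; apply: ler_wpM2l; first exact: (@adopt_ge0 R N M beta b01').
  rewrite -expRD; apply: le_trans (@ind_lt_exp R _ _ 1 ler01) _.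
  by rewrite mul1r mulN1r.
under eq_bigr do rewrite mulrCA.
rewrite -mulr_sumr expRD ler_wpM2l ?expR_ge0 //.
rewrite /Dn /adopt_w.
rewrite (@mgf_prod R _ _ (fun i (u : option 'I_M) => match u with
    | Some j => (j == s i)%:R * (if phi j then beta else 1 - beta)
    | None => if phi (s i) then 1 - beta else beta
    end) (fun i (u : option 'I_M) => (u != None) : nat) (-1)).
rewrite -mulNr expRM_natr.
have -> : expR (- ((1 - beta) / 2)) ^+ N = \prod_(i < N) expR (- ((1 - beta) / 2))
  by rewrite prodr_const card_ord.
apply: ler_prod => i _.
rewrite sum_option /= mulr0 expR0 mulr1.
rewrite (bigD1 (s i)) //= eqxx mul1r big1 ?addr0; last first.
  by move=> j /negbTE ->; rewrite !mul0r.
have e1 := @expRN1_le_half R; have e0 := expR_gt0 (-1 : R).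
have ex := expR_ge1Dx (- ((1 - beta) / 2)).
rewrite mulr1 in e0 e1 *.
case: (phi (s i)); apply/andP; split; nra.
Qed.

Lemma tok_mgf (x : state N M) i t :
  \sum_(e : endpoints N T) tok_w R adj L x e * expR (t * (sampled x e i)%:R)
  = \prod_a (if x a is Some _ then (1 + mh_walk R adj L a i * (expR t - 1)) ^+ T else 1).
Proof.
rewrite /tok_w /sampled (@mgf_prod R _ _ (fun a (ea : {ffun 'I_T -> 'I_N}) => match x a with
    | Some _ => \prod_(k : 'I_T) mh_walk R adj L a (ea k)
    | None => (ea == [ffun => a])%:R
    end) (fun a (ea : {ffun 'I_T -> 'I_N}) => (\sum_k ((x a != None) && (ea k == i) : nat))%N) t).
apply: eq_bigr => a _; case: (x a) => [j|] /=.
  rewrite (@mgf_prod R _ _ (fun k v => mh_walk R adj L a v) (fun k v => ((v == i) : nat)) t).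
  rewrite prodr_const card_ord; congr (_ ^+ _).
  have := @mh_walk_sum R N adj irr L a.
  rewrite (bigD1 i) //= => hs; rewrite (bigD1 i) //= eqxx mulr1.
  rewrite (eq_bigr (fun v => mh_walk R adj L a v)); last first.
    by move=> v /negbTE ->; rewrite mulr0 expR0 mulr1.
  have -> : \sum_(v | v != i) mh_walk R adj L a v = 1 - mh_walk R adj L a i.
    by rewrite -hs addrC addrK.
  ring.
under eq_bigr do rewrite big1_eq mulr0 expR0 mulr1.
exact: sum_eq1.
Qed.

Lemma tok_mgf_le (x : state N M) i t :
  (forall a, 0 <= mh_walk R adj L a i <= 1) ->
  \prod_a (if x a is Some _ then (1 + mh_walk R adj L a i * (expR t - 1)) ^+ T else 1)
  <= expR (\sum_a (if x a is Some _ then T%:R * (mh_walk R adj L a i * (expR t - 1)) else 0)).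
Proof.
move=> pb; rewrite expR_sum; apply: ler_prod => a _.
have /andP[p0 p1] := pb a; have et := expR_gt0 t.
case: (x a) => [j|]; last by rewrite expR0 ler01 lexx.
have h0 : 0 <= 1 + mh_walk R adj L a i * (expR t - 1) by nra.
rewrite exprn_ge0 //= expRM_natl.
apply: lerXn2r; rewrite ?nnegrE ?expR_ge0 //.
exact: expR_ge1Dx.
Qed.

Lemma ind_split (lo hi v : R) :
  1 - (nat_of_bool ((lo <= v) && (v <= hi)))%:R <= expR (lo - v) + expR ((v - hi) / 4).
Proof.
have e1 := expR_ge1Dx (lo - v); have e2 := expR_ge1Dx ((v - hi) / 4).
have e3 := expR_gt0 (lo - v); have e4 := expR_gt0 ((v - hi) / 4).
case: (leP lo v) => h1 /=; case: (leP v hi) => h2 /=; rewrite ?subrr ?subr0; lra.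
Qed.

Lemma good_prob (x : state N M) i (lo hi : R) :
  (forall u v, 0 <= mh_walk R adj L u v <= 1) ->
  1 - expR (lo + \sum_a (if x a is Some _ then T%:R * (mh_walk R adj L a i * (expR (-1) - 1)) else 0))
    - expR (- hi / 4 + \sum_a (if x a is Some _ then T%:R * (mh_walk R adj L a i * (expR (1/4) - 1)) else 0))
  <= \sum_(e : endpoints N T) tok_w R adj L x e *
       (nat_of_bool ((lo <= (sampled x e i)%:R) && ((sampled x e i)%:R <= hi)))%:R.
Proof.
move=> wb.
have w0 : forall u v, 0 <= mh_walk R adj L u v by move=> u v; case/andP: (wb u v).
have pb : forall a, 0 <= mh_walk R adj L a i <= 1 by move=> a; exact: wb.
have E1 : \sum_(e : endpoints N T) tok_w R adj L x e * expR (lo - (sampled x e i)%:R)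
    <= expR (lo + \sum_a (if x a is Some _ then T%:R * (mh_walk R adj L a i * (expR (-1) - 1)) else 0)).
  rewrite (eq_bigr (fun e => expR lo * (tok_w R adj L x e * expR (-1 * (sampled x e i)%:R)))); last first.
    by move=> e _; rewrite mulrCA -expRD mulN1r.
  rewrite -mulr_sumr tok_mgf expRD ler_wpM2l ?expR_ge0 //.
  exact: tok_mgf_le.
have E2 : \sum_(e : endpoints N T) tok_w R adj L x e * expR (((sampled x e i)%:R - hi) / 4)
    <= expR (- hi / 4 + \sum_a (if x a is Some _ then T%:R * (mh_walk R adj L a i * (expR (1/4) - 1)) else 0)).
  rewrite (eq_bigr (fun e => expR (- hi / 4) * (tok_w R adj L x e * expR (1/4 * (sampled x e i)%:R)))); last first.
    by move=> e _; rewrite mulrCA -expRD; congr (_ * expR _); ring.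
  rewrite -mulr_sumr tok_mgf expRD ler_wpM2l ?expR_ge0 //.
  exact: tok_mgf_le.
have E3 : \sum_(e : endpoints N T) tok_w R adj L x e *
    (1 - (expR (lo - (sampled x e i)%:R) + expR (((sampled x e i)%:R - hi) / 4)))
  <= \sum_(e : endpoints N T) tok_w R adj L x e *
       (nat_of_bool ((lo <= (sampled x e i)%:R) && ((sampled x e i)%:R <= hi)))%:R.
  apply: ler_sum => e _; apply: ler_wpM2l; first exact: tok_ge0.
  have := ind_split lo hi (sampled x e i)%:R; lra.
apply: le_trans E3.
rewrite (eq_bigr (fun e => tok_w R adj L x e - (tok_w R adj L x e * expR (lo - (sampled x e i)%:R)
   + tok_w R adj L x e * expR (((sampled x e i)%:R - hi) / 4)))); last by move=> e _; ring.
rewrite sumrB big_split /= (tok_sum R N M T adj L irr x).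
lra.
Qed.

End Chern.

Lemma expR_ln10 (R : realType) (n : R) : 0 < n -> expR (- (10 * ln n)) = (n ^+ 10)^-1.
Proof.
move=> n0; rewrite expRN expRM_natl lnK //.
Qed.

Lemma ln_ge1 (R : realType) (n : R) : 4 <= n -> 1 <= ln n.
Proof.
move=> n4; have e := @expR1_le4 R.
rewrite -[X in X <= _](expRK 1) ler_ln ?posrE ?expR_gt0 //; first lra.
lra.
Qed.

Theorem lemma6 (R : realType) (M : nat) (eps mu beta sigma : R)
    (eta : 'I_M -> R) (g : nat -> R) :
  (0 < M)%N -> 0 < eps -> 0 < mu < 1 -> 1 / 2 < beta < 1 -> 11 <= sigma ->
  (forall j, 0 <= eta j <= 1) ->
  (forall l : R, 0 < l -> exists N0 : nat, forall N : nat, (N0 <= N)%N ->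
       l * ln (N%:R : R) < g N) ->
  (forall l : R, 0 < l -> exists N0 : nat, forall N : nat, (N0 <= N)%N ->
       g N < l * N%:R) ->
  let h := 16 * sigma / (1 - beta) in
  exists N0 : nat, forall N : nat, (N0 <= N)%N -> 4 * ln (N%:R : R) <= N%:R ->
  forall adj : rel 'I_N, symmetric adj -> irreflexive adj ->
    graph_connected adj -> ~ bipartite adj ->
  forall L : nat, mixing R adj L ->
  forall T : nat, h * g N <= T%:R < h * g N + 1 ->
  forall (i : 'I_N) (r : nat), (2 <= r)%N ->
    prob_V T adj L eps mu beta eta r i
      (3 * (1 - beta) / 32 * h * g N) (15 / 8 * h * g N)
    >= 1 - (6 * M + 3)%:R / (N%:R ^+ 10).
Proof.
move=> M0 eps0 mu01 beta01 sig11 eta01 gA gB h.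
have /andP[b0 b1] := beta01.
have [N1 HN1] := gA 4 ltac:(lra).
have [N2 HN2] := gA 1 ltac:(lra).
have [N3 HN3] := gB ((1 - beta) / 40) ltac:(apply: divr_gt0; lra).
exists (maxn 4 (maxn N1 (maxn N2 N3))).
move=> N HN _ adj sym irr conn nbip L mix T /andP[T1 T2] i r r2.
rewrite !geq_max in HN; case/and4P: HN => HN4 HN1' HN2' HN3'.
have {HN1}g4 := HN1 N HN1'; have {HN2}g1 := HN2 N HN2'; have {HN3}gb := HN3 N HN3'.
set n := (N%:R : R) in g4 g1 gb *.
have n4 : 4 <= n by rewrite /n (ler_nat R 4 N).
have ln1 := @ln_ge1 R n n4.
set G := g N in g4 g1 gb T1 T2 *.
have G0 : 0 < G by lra.
set delta := (n ^+ 10)^-1.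
have d0 : 0 <= delta by rewrite invr_ge0 exprn_ge0 //; lra.
set lo := 3 * (1 - beta) / 32 * h * G.
set hi := 15 / 8 * h * G.
have hb : h * (1 - beta) = 16 * sigma by rewrite /h; field; lra.
set u := n^-1.
have un : u * n = 1 by rewrite /u mulVf //; lra.
have u0 : 0 < u by rewrite /u invr_gt0; lra.
have u4 : u <= 1/4 by nra.
have e3 : n * u ^+ 3 = u ^+ 2 by rewrite -[u ^+ 2]mul1r -un; ring.
have u2 : u ^+ 2 <= 1/16 by rewrite expr2; nra.
have u20 : 0 <= u ^+ 2 by rewrite exprn_ge0 // ltW.
have u3 : u ^+ 3 <= u ^+ 2 by rewrite exprS; nra.
have u30 : 0 <= u ^+ 3 by rewrite exprn_ge0 // ltW.
have wmix : forall a b, u - u ^+ 3 <= mh_walk R adj L a b <= u + u ^+ 3.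
  by move=> a b; have := mix a b; rewrite -/n -exprVn.
have wb : forall a b, 0 <= mh_walk R adj L a b <= 1.
  move=> a b; have /andP[w1 w2] := wmix a b; apply/andP; split; nra.
have T0 : 0 <= T%:R :> R by exact: ler0n.
set d := (1 - beta) / 4 * n.
have F3 : expR (d - (1 - beta) / 2 * n) <= delta.
  rewrite /delta -expR_ln10; last lra.
  rewrite ler_expR /d; nra.
have Glo : lo = 3 * (sigma * G) / 2.
  rewrite /lo.
  have -> : 3 * (1 - beta) / 32 * h * G = 3 / 32 * (h * (1 - beta)) * G by ring.
  by rewrite hb; field.
have sG : 11 * G <= sigma * G by rewrite ler_wpM2r //; lra.
have TbG : 16 * (sigma * G) <= (1 - beta) * T%:R.
  have -> : 16 * (sigma * G) = (1 - beta) * (h * G).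
    have -> : (1 - beta) * (h * G) = (h * (1 - beta)) * G by ring.
    by rewrite hb; ring.
  by rewrite ler_wpM2l //; lra.
pose S1 (x : state N M) := \sum_a (if x a is Some _ then T%:R * (mh_walk R adj L a i * (expR (-1) - 1)) else 0).
have F1 : forall x : state N M, d <= (Dn x)%:R -> expR (lo + S1 x) <= delta.
  move=> x dD.
  have S1le : S1 x <= (Dn x)%:R * (- (T%:R / 2 * (u - u ^+ 3))).
    rewrite /S1 /Dn natr_sum mulr_suml; apply: ler_sum => a _.
    case: (x a) => [j|] /=; last by rewrite mul0r.
    rewrite mul1r; have /andP[w1 w2] := wmix a i.
    have e1 := @expRN1_le_half R; have e0 := expR_gt0 (-1 : R).
    have p0 : 0 <= mh_walk R adj L a i by case/andP: (wb a i).
    have h2 : 0 <= mh_walk R adj L a i * (1/2 - expR (-1)) by apply: mulr_ge0 => //; lra.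
    have h1 : mh_walk R adj L a i * (expR (-1) - 1) <= - ((u - u ^+ 3) / 2) by nra.
    have -> : - (T%:R / 2 * (u - u ^+ 3)) = T%:R * (- ((u - u ^+ 3) / 2)) by ring.
    by rewrite ler_wpM2l.
  have P1 : d * (T%:R / 2 * (u - u ^+ 3)) <= (Dn x)%:R * (T%:R / 2 * (u - u ^+ 3)).
    by rewrite ler_wpM2r //; nra.
  have P2 : d * (T%:R / 2 * (u - u ^+ 3)) = (1 - beta) * T%:R / 8 * (n * (u - u ^+ 3)).
    by rewrite /d; field.
  have P3 : (1 - beta) * T%:R / 8 * (15 / 16) <= (1 - beta) * T%:R / 8 * (n * (u - u ^+ 3)).
    by rewrite ler_wpM2l; nra.
  rewrite P2 in P1.
  have Q := le_trans P3 P1.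
  rewrite mulrN in S1le.
  rewrite /delta -expR_ln10; last lra.
  rewrite ler_expR; lra.
pose S2 (x : state N M) := \sum_a (if x a is Some _ then T%:R * (mh_walk R adj L a i * (expR (1/4) - 1)) else 0).
have F2 : forall x : state N M, expR (- hi / 4 + S2 x) <= delta.
  move=> x.
  have z0 : 0 <= expR (1/4 : R) - 1 by have := expR_ge1Dx (1/4 : R); lra.
  have z1 : expR (1/4 : R) - 1 <= 1/3.
    have := @expR_le_inv R (1/4) ltac:(lra).
    have -> : (1 - 1/4 : R)^-1 = 4/3 by field.
    lra.
  have S2le : S2 x <= \sum_(a : 'I_N) T%:R * ((u + u ^+ 3) * (1/3)).
    rewrite /S2; apply: ler_sum => a _.
    have /andP[w1 w2] := wmix a i.
    have p0 : 0 <= mh_walk R adj L a i by case/andP: (wb a i).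
    case: (x a) => [j|] /=; last by apply: mulr_ge0 => //; nra.
    apply: ler_wpM2l => //.
    have : mh_walk R adj L a i * (expR (1 / 4) - 1) <= mh_walk R adj L a i * (1/3) by rewrite ler_wpM2l.
    have : mh_walk R adj L a i * (1/3) <= (u + u ^+ 3) * (1/3) by rewrite ler_wpM2r //; lra.
    lra.
  rewrite sumr_const card_ord -[_ *+ N]mulr_natr in S2le.
  have P1 : T%:R * ((u + u ^+ 3) * (1/3)) * n = T%:R / 3 * (1 + u ^+ 2).
    have -> : T%:R * ((u + u ^+ 3) * (1/3)) * n = T%:R / 3 * (u * n + n * u ^+ 3) by field.
    by rewrite un e3.
  rewrite -/n P1 in S2le.
  have P4 : T%:R / 3 * (1 + u ^+ 2) <= T%:R / 3 * (17/16) by rewrite ler_wpM2l //; lra.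
  have h0 : 0 <= h by rewrite /h; apply: divr_ge0; lra.
  have hh : 32 * sigma <= h.
    have := mulr_ge0 h0 (_ : 0 <= beta - 1/2); lra.
  have hG : 352 * G <= h * G by rewrite ler_wpM2r //; lra.
  rewrite /delta -expR_ln10; last lra.
  rewrite ler_expR /hi; lra.
have b01' : 0 < beta < 1 by apply/andP; split; lra.
have walk0 : forall u v, 0 <= mh_walk R adj L u v by move=> a b; case/andP: (wb a b).
have HG : forall x : state N M, (nat_of_bool (d <= (Dn x)%:R))%:R - 2 * delta <=
    \sum_(e : endpoints N T) tok_w R adj L x e *
       (nat_of_bool ((lo <= (sampled x e i)%:R) && ((sampled x e i)%:R <= hi)))%:R.
  move=> x; case: (leP d (Dn x)%:R) => dD /=.
    have := @good_prob R N M T adj L irr x i lo hi wb.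
    have := F1 x dD; have := F2 x; rewrite /S1 /S2; lra.
  have : 0 <= \sum_(e : endpoints N T) tok_w R adj L x e *
       (nat_of_bool ((lo <= (sampled x e i)%:R) && ((sampled x e i)%:R <= hi)))%:R.
    by apply: sumr_ge0 => e _; apply: mulr_ge0; [apply: tok_ge0 | apply: ler0n].
  lra.
have WS : forall x0 (c : R), \sum_y \sum_(e : endpoints N T) \sum_phi \sum_s
    Wt R N M T adj L eps mu eta x0 y e phi s * c = c.
  move=> x0 c.
  transitivity ((\sum_y \sum_(e : endpoints N T) \sum_phi \sum_s
    Wt R N M T adj L eps mu eta x0 y e phi s) * c); last by rewrite (@Wt_sum _ _ _ _ _ _ _ _ _ M0 irr) mul1r.
  rewrite mulr_suml; apply: eq_bigr => y _; rewrite mulr_suml; apply: eq_bigr => e _.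
  rewrite mulr_suml; apply: eq_bigr => phi _; by rewrite mulr_suml.
have HD : \sum_x Xlaw T adj L eps mu beta eta r.-1 x * (nat_of_bool ((Dn x)%:R < d))%:R <= delta.
  case: r r2 => [|[|r']] // _.
  have XS : forall x, Xlaw T adj L eps mu beta eta (r'.+2).-1 x =
     \sum_x0 Xlaw T adj L eps mu beta eta r' x0 * kernel T adj L eps mu beta eta x0 x by [].
  under eq_bigr do rewrite XS mulr_suml.
  rewrite exchange_big /=.
  apply: (@le_trans _ _ (\sum_x0 Xlaw T adj L eps mu beta eta r' x0 * delta)); last first.
    by rewrite -mulr_suml (@Xlaw_sum _ _ _ _ _ _ _ _ _ _ M0 irr) mul1r.
  apply: ler_sum => x0 _.
  under eq_bigr do rewrite -mulrA.
  rewrite -mulr_sumr ler_wpM2l ?(@Xlaw_ge0 _ _ _ _ _ _ _ _ _ _ mu01 b01' eta01 walk0) //.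
  rewrite kernel_expand -[X in _ <= X](WS x0 delta).
  apply: ler_sum => y _; apply: ler_sum => e _; apply: ler_sum => phi _; apply: ler_sum => s _.
  rewrite ler_wpM2l ?(@Wt_ge0 _ _ _ _ _ _ _ _ _ mu01 eta01 walk0) //.
  exact: le_trans (@adopt_tail _ _ _ _ beta01 _ _ _) F3.
rewrite /prob_V.
have E : \sum_x Xlaw T adj L eps mu beta eta r.-1 x * ((nat_of_bool (d <= (Dn x)%:R))%:R - 2 * delta)
   = 1 - \sum_x Xlaw T adj L eps mu beta eta r.-1 x * (nat_of_bool ((Dn x)%:R < d))%:R - 2 * delta.
  rewrite (eq_bigr (fun x => Xlaw T adj L eps mu beta eta r.-1 x
      - Xlaw T adj L eps mu beta eta r.-1 x * (nat_of_bool ((Dn x)%:R < d))%:R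
      - Xlaw T adj L eps mu beta eta r.-1 x * (2 * delta))); last first.
    by move=> x _; case: leP => _ /=; ring.
  by rewrite !sumrB (@Xlaw_sum _ _ _ _ _ _ _ _ _ _ M0 irr) -mulr_suml (@Xlaw_sum _ _ _ _ _ _ _ _ _ _ M0 irr) mul1r.
have K : 1 - \sum_x Xlaw T adj L eps mu beta eta r.-1 x * (nat_of_bool ((Dn x)%:R < d))%:R - 2 * delta
   <= \sum_x Xlaw T adj L eps mu beta eta r.-1 x * \sum_(e : endpoints N T) tok_w R adj L x e *
       (nat_of_bool ((lo <= (sampled x e i)%:R) && ((sampled x e i)%:R <= hi)))%:R.
  rewrite -E; apply: ler_sum => x _; apply: ler_wpM2l; last exact: HG.
  exact: (@Xlaw_ge0 _ _ _ _ _ _ _ _ _ _ mu01 b01' eta01 walk0).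
have c3 : 3 <= (6 * M + 3)%:R :> R by rewrite (ler_nat R 3) leq_addl.
have c4 : 3 * delta <= (6 * M + 3)%:R * delta by rewrite ler_wpM2r.
apply: le_trans K; lra.
Qed.
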